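(* Consider a radial three-phase distribution grid on buses $\{0,\ldots,N\}$ (feeder bus $0$, each bus $n\geq1$ with parent $\pi_n<n$, line $n$ joining $\pi_n$ and $n$), with symmetric phase impedance matrices $\mathbf{Z}_n=\mathbf{Z}_n^{\top}\in\mathbb{C}^{3\times3}$, $n=1,\ldots,N$. Let $\tilde{\mathbf{Z}}_n:=\operatorname{diag}(\boldsymbol{\alpha}^* )\mathbf{Z}_n\operatorname{diag}(\boldsymbol{\alpha})$ with $\boldsymbol{\alpha}:=[1~\alpha~\alpha^2]^{\top}$, $\alpha=e^{-j2\pi/3}$, and $\mathbf{X}:=2\mathbf{M}\,\mathrm{bdiag}(\{\mathrm{Im}[\tilde{\mathbf{Z}}_n]\})\mathbf{M}^{\top}$ with $\mathbf{M}:=\mathbf{T}(\mathbf{I}_3\otimes\mathbf{F})\mathbf{T}^{\top}$. If $\mathrm{Im}[\mathbf{Z}_n]$ is strictly diagonally dominant with positive diagonal entries for all $n$, then $\mathbf{X}\succeq\mathbf{0}$.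
   Context: The full branch-bus incidence matrix $\tilde{\mathbf{A}}=[\mathbf{a}_0~\mathbf{A}]\in\mathbb{R}^{N\times(N+1)}$ has in row $n$ entry $+1$ at column $\pi_n$, $-1$ at column $n$, zeros elsewhere; $\mathbf{A}$ is the reduced incidence matrix (column of bus $0$ removed) and $\mathbf{F}:=-\mathbf{A}^{-1}$. $\mathrm{bdiag}(\{\mathbf{Y}_n\})$ is block diagonal with blocks $\mathbf{Y}_1,\ldots,\mathbf{Y}_N$. $\mathbf{T}:=[\mathbf{I}_3\otimes\mathbf{e}_1^{\top};\ldots;\mathbf{I}_3\otimes\mathbf{e}_N^{\top}]\in\mathbb{R}^{3N\times3N}$ (blocks stacked vertically), with $\mathbf{e}_n$ the $n$-th column of $\mathbf{I}_N$. $^*$ is entrywise conjugation, $\mathrm{Im}$ entrywise imaginary part. For a non-symmetric real matrix $\mathbf{Y}$, $\mathbf{Y}\succeq\mathbf{0}$ means $\mathbf{u}^{\top}\mathbf{Y}\mathbf{u}\geq0$ for all real $\mathbf{u}$. *)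

(* Defs.v *)
From HB Require Import structures.
From mathcomp Require Import all_boot all_order all_algebra.
From mathcomp Require Import complex mxtens.
Set Implicit Arguments. Unset Strict Implicit. Unset Printing Implicit Defensive.
Import Order.TTheory GRing.Theory Num.Theory.
Local Open Scope ring_scope.

(* Vertical stacking of N blocks B_0,...,B_{N-1}, each of size m x n;
   row (k, r) (index k*m + r) of the result is row r of B_k. *)
Definition vstack (R : Type) (N m n : nat) (B : 'I_N -> 'M[R]_(m, n))
  : 'M[R]_(N * m, n) :=
  \matrix_(i, j) B (mxtens_unindex i).1 (mxtens_unindex i).2 j.

Definition bdiag (R : pzRingType) (N m : nat) (Y : 'I_N -> 'M[R]_m)
  : 'M[R]_(N * m) :=
  \matrix_(i, j) if (mxtens_unindex i).1 == (mxtens_unindex j).1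
                 then Y (mxtens_unindex i).1 (mxtens_unindex i).2
                        (mxtens_unindex j).2
                 else 0.

(* Line k : 'I_N is line n = k+1 of the
   paper; its parent bus is par k (a natural number <= k, i.e. pi_n < n);
   column j : 'I_N is bus j+1 (the column of bus 0 is removed). *)
Definition incidence (R : pzRingType) (N : nat) (par : 'I_N -> nat) : 'M[R]_N :=
  \matrix_(k, j) ((par k == j.+1)%:R - (j == k :> nat)%:R).

Definition Fmat (R : comUnitRingType) (N : nat) (par : 'I_N -> nat) : 'M[R]_N :=
  - invmx (incidence R par).

Definition Tmat (R : pzRingType) (N : nat) : 'M[R]_(N * (3 * 1), 3 * N) :=
  vstack (fun n : 'I_N => (1%:M : 'M[R]_3) *t (delta_mx 0 n : 'M[R]_(1, N))).

Definition Mmat (R : comUnitRingType) (N : nat) (par : 'I_N -> nat)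
  : 'M[R]_(N * (3 * 1)) :=
  Tmat R N *m ((1%:M : 'M[R]_3) *t Fmat R par) *m (Tmat R N)^T.

(* alpha = e^{-j 2 pi / 3} = -1/2 - j sqrt(3)/2 *)
Definition alpha (R : rcfType) : R[i] :=
  Complex (- (1 / 2)) (- (Num.sqrt 3 / 2)).

Definition alphavec (R : rcfType) : 'cV[R[i]]_3 :=
  \col_(p < 3) (alpha R ^+ p).

Definition Ztilde (R : rcfType) (Z : 'M[R[i]]_3) : 'M[R[i]]_3 :=
  diag_mx (map_mx (@conjc R) (alphavec R))^T *m Z *m diag_mx (alphavec R)^T.

Definition ImMx (R : rcfType) (m n : nat) (A : 'M[R[i]]_(m, n)) : 'M[R]_(m, n) :=
  map_mx (@complex.Im R) A.

Definition Xmat (R : rcfType) (N : nat) (par : 'I_N -> nat)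
  (Z : 'I_N -> 'M[R[i]]_3) : 'M[R]_(N * (3 * 1)) :=
  2%:R *: (Mmat R par *m bdiag (fun n => ImMx (Ztilde (Z n))) *m (Mmat R par)^T).

Definition strictly_diag_dominant (R : numDomainType) (m : nat) (Y : 'M[R]_m) :=
  forall i : 'I_m, \sum_(j < m | j != i) `|Y i j| < `|Y i i|.

(* Y >= 0 for a possibly non-symmetric real matrix: u^T Y u >= 0 for all real u *)
Definition psd (R : numDomainType) (m : nat) (Y : 'M[R]_m) :=
  forall u : 'cV[R]_m, 0 <= (u^T *m Y *m u) 0 0.

(* Main.v *)
Require Import Defs.
From HB Require Import structures.
From mathcomp Require Import all_boot all_order all_algebra.
From mathcomp Require Import complex mxtens.
From mathcomp Require Import ring lra.
Import Order.TTheory GRing.Theory Num.Theory.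
Local Open Scope ring_scope.
Section S.
Variable R : rcfType.
Lemma sq3 : Num.sqrt (3:R) * Num.sqrt 3 = 3.
Proof. by rewrite -expr2 sqr_sqrtr // ler0n. Qed.
Lemma alpha_conj : conjc (alpha R) * alpha R = 1.
Proof. apply/eqP; rewrite eq_complex /= ; apply/andP; split; apply/eqP;
  have := sq3; set t := Num.sqrt _; move=> h; nra. Qed.
Lemma alpha2 : alpha R ^+ 2 = conjc (alpha R).
Proof. rewrite expr2 /alpha. apply/eqP; rewrite eq_complex /=; apply/andP; split; apply/eqP;
  have := sq3; set t := Num.sqrt _; move=> h; nra. Qed.
Lemma calpha2 : conjc (alpha R) * conjc (alpha R) = alpha R.
Proof. apply/eqP; rewrite eq_complex /=; apply/andP; split; apply/eqP;
  have := sq3; set t := Num.sqrt _; move=> h; nra. Qed.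
Lemma ImM (x y : R[i]) : complex.Im (x * y) = complex.Re x * complex.Im y + complex.Im x * complex.Re y.
Proof. by case: x => a b; case: y => c d /=; ring. Qed.
Lemma entry (Z : 'M[R[i]]_3) r s : ImMx (Ztilde Z) r s =
  complex.Im (conjc (alpha R ^+ r) * alpha R ^+ s * Z r s).
Proof. rewrite /ImMx /Ztilde mxE mul_diag_mx mul_mx_diag !mxE. 
congr complex.Im. ring. Qed.

Definition i0 : 'I_3 := @Ordinal 3 0 isT.
Definition i1 : 'I_3 := @Ordinal 3 1 isT.
Definition i2 : 'I_3 := @Ordinal 3 2 isT.
Lemma sum3 (F : 'I_3 -> R) : \sum_r F r = F i0 + F i1 + F i2.
Proof. rewrite !big_ord_recl big_ord0 addr0 addrA. by congr (F _ + F _ + F _); apply: val_inj. Qed.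

Lemma abs_le (a u v : R) : a * u * v <= `|a| * (u ^+ 2 + v ^+ 2) / 2.
Proof.
have [ha|ha] := ler0P a.
- have : 0 <= (-a) * (u + v) ^+ 2 by apply: mulr_ge0; rewrite ?oppr_ge0 ?sqr_ge0.
  move=> h; nra.
- have : 0 <= a * (u - v) ^+ 2 by apply: mulr_ge0; [exact: ltW|exact: sqr_ge0].
  move=> h; nra.
Qed.

Lemma block_psd (Z : 'M[R[i]]_3) : Z^T = Z -> strictly_diag_dominant (ImMx Z) ->
  (forall p, 0 < ImMx Z p p) -> forall v : 'I_3 -> R,
  0 <= \sum_r \sum_s v r * ImMx (Ztilde Z) r s * v s.
Proof.
move=> hs hd hp v.
have sym : forall r s, Z r s = Z s r by move=> r s; rewrite -{1}hs mxE.
have d0 := hd i0; have d1 := hd i1; have d2 := hd i2.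
have p0 := hp i0; have p1 := hp i1; have p2 := hp i2.
rewrite big_mkcond sum3 /= in d0.
rewrite big_mkcond sum3 /= in d1.
rewrite big_mkcond sum3 /= in d2.
rewrite /ImMx !mxE in d0 d1 d2 p0 p1 p2.
have e0 : alpha R ^+ i0 = 1 by exact: expr0.
have e1 : alpha R ^+ i1 = alpha R by exact: expr1.
have e2 : alpha R ^+ i2 = conjc (alpha R) by exact: alpha2.
rewrite !sum3 !entry e0 e1 e2 conjc1 conjcK !mul1r !mulr1 alpha_conj.
rewrite [alpha R * conjc _]mulrC alpha_conj -[alpha R * alpha R]expr2 alpha2 calpha2 !mul1r.
rewrite !ImM /= (sym i1 i0) (sym i2 i0) (sym i2 i1).
rewrite (sym i1 i0) (sym i2 i0) (sym i2 i1) in d1 d2.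
rewrite (gtr0_norm p0) in d0; rewrite (gtr0_norm p1) in d1; rewrite (gtr0_norm p2) in d2.
set b00 := complex.Im (Z i0 i0) in p0 d0 *.
set b11 := complex.Im (Z i1 i1) in p1 d1 *.
set b22 := complex.Im (Z i2 i2) in p2 d2 *.
set b01 := complex.Im (Z i0 i1) in d0 d1 *.
set b02 := complex.Im (Z i0 i2) in d0 d2 *.
set b12 := complex.Im (Z i1 i2) in d1 d2 *.
have A01 := abs_le b01 (v i0) (v i1).
have A02 := abs_le b02 (v i0) (v i2).
have A12 := abs_le b12 (v i1) (v i2).
have m0 : (`|b01| + `|b02|) * v i0 ^+ 2 <= b00 * v i0 ^+ 2.
  by apply: ler_wpM2r; [exact: sqr_ge0| lra].
have m1 : (`|b01| + `|b12|) * v i1 ^+ 2 <= b11 * v i1 ^+ 2.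
  by apply: ler_wpM2r; [exact: sqr_ge0| lra].
have m2 : (`|b02| + `|b12|) * v i2 ^+ 2 <= b22 * v i2 ^+ 2.
  by apply: ler_wpM2r; [exact: sqr_ge0| lra].
have q0 : 0 <= b00 * v i0 ^+ 2 by apply: mulr_ge0; [exact: ltW|exact: sqr_ge0].
have q1 : 0 <= b11 * v i1 ^+ 2 by apply: mulr_ge0; [exact: ltW|exact: sqr_ge0].
have q2 : 0 <= b22 * v i2 ^+ 2 by apply: mulr_ge0; [exact: ltW|exact: sqr_ge0].
lra.
Qed.

Lemma sumI (N : nat) (F : 'I_(N * 3) -> R) :
  \sum_i F i = \sum_k \sum_(r < 3) F (mxtens_index (k, r)).
Proof.
rewrite pair_bigA /=.
rewrite (reindex (@mxtens_index N 3)) /=; last first.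
  by exists (@mxtens_unindex N 3) => x _; [apply: mxtens_indexK|apply: mxtens_unindexK].
by apply: eq_bigr => -[k r].
Qed.

Lemma bdiag_psd (N : nat) (Y : 'I_N -> 'M[R]_3) :
  (forall k (v : 'I_3 -> R), 0 <= \sum_r \sum_s v r * Y k r s * v s) ->
  forall w : 'cV[R]_(N * 3), 0 <= (w^T *m bdiag Y *m w) 0 0.
Proof.
move=> hY w.
rewrite mxE.
under eq_bigr do rewrite mxE big_distrl /=.
rewrite exchange_big /= sumI.
apply: sumr_ge0 => k _.
have -> : \sum_(r < 3) \sum_(i < N * 3) w^T 0 (mxtens_index (k, r)) *
     bdiag Y (mxtens_index (k, r)) i * w i 0 =
  \sum_r \sum_s w (mxtens_index (k, r)) 0 * Y k r s * w (mxtens_index (k, s)) 0.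
  apply: eq_bigr => r _; rewrite sumI (bigD1 k) //= [X in _ + X]big1 ?addr0.
    by apply: eq_bigr => s _; rewrite !mxE !mxtens_indexK /= eqxx.
  move=> k' hk; apply: big1 => s _.
  by rewrite !mxE !mxtens_indexK /= eq_sym (negbTE hk) mulr0 mul0r.
exact: (hY k (fun r => w (mxtens_index (k, r)) 0)).
Qed.
End S.

Theorem corollary1 (R : rcfType) (N : nat) (par : 'I_N -> nat)
  (Z : 'I_N -> 'M[R[i]]_3) :
  (forall n : 'I_N, par n <= n)%N ->
  (forall n : 'I_N, (Z n)^T = Z n) ->
  (forall n : 'I_N, strictly_diag_dominant (ImMx (Z n)) /\
                    (forall p : 'I_3, 0 < ImMx (Z n) p p)) ->
  psd (Xmat par Z).
Proof.
move=> _ hs hd u.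
rewrite /Xmat -scalemxAr -scalemxAl mxE.
apply: mulr_ge0; first by rewrite ler0n.
set M := Mmat R par.
set B := bdiag _.
have -> : u^T *m (M *m B *m M^T) *m u = (M^T *m u)^T *m B *m (M^T *m u).
  by rewrite !trmx_mul !trmxK !mulmxA.
apply: (@bdiag_psd R N (fun n => ImMx (Ztilde (Z n)))) => k v.
have [h1 h2] := hd k.
exact: block_psd.
Qed.
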